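(* Let $g\in\mathbb{R}^n$, $\Delta>0$, and $B\in\mathbb{R}^{n\times n}$ (not necessarily symmetric) be positive semidefinite in the sense $h^TBh\ge0$ for all $h\in\mathbb{R}^n$, and let $m(s)=c+\langle g,s\rangle+\frac12\langle s,Bs\rangle$ for a constant $c$. Suppose $t\ge0$ and constants $\lambda_1,\lambda_2>0$ satisfy $\frac12h^TBh+t\|h\|^2\ge\lambda_1\|h\|^2$ for all $h\in\mathbb{R}^n$ and $\|B+tI\|\le\lambda_2$. Let $p\in\mathbb{R}^n$ satisfy $(B+tI)p=-g+r$ with $\|r\|\le\frac{\lambda_1}{2(\lambda_1+\lambda_2)}\|g\|$, and set $s=\min\{\Delta,\|p\|\}\,p/\|p\|$. Then $$m(0)-m(s)\ge\frac{\gamma_1}{2}\|g\|\min\{\Delta,\gamma_2\|g\|\}\quad\text{with }\gamma_1=\frac{\lambda_1}{2\lambda_2},\ \gamma_2=\frac{\lambda_1+2\lambda_2}{2\lambda_2(\lambda_1+\lambda_2)}.$$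
   Context: $\|\cdot\|$ denotes the Euclidean norm on vectors; the matrix norm bound $\|B+tI\|\le\lambda_2$ is used as a bound on the operator norm $\max_{h\ne0}\|(B+tI)h\|/\|h\|$ (the Frobenius norm bounds it from above). *)

(* Defs.v *)
From HB Require Import structures.
From mathcomp Require Import all_boot all_order all_algebra.
Set Implicit Arguments. Unset Strict Implicit. Unset Printing Implicit Defensive.
Import Order.TTheory GRing.Theory Num.Theory.
Local Open Scope ring_scope.

Definition dotv (R : rcfType) (n : nat) (u v : 'cV[R]_n) : R :=
  \sum_(i < n) u i 0 * v i 0.

Definition enorm (R : rcfType) (n : nat) (u : 'cV[R]_n) : R :=
  Num.sqrt (dotv u u).

Definition opnorm_le (R : rcfType) (n : nat) (A : 'M[R]_n) (c : R) : Prop :=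
  forall h : 'cV[R]_n, enorm (A *m h) <= c * enorm h.

Definition qmodel (R : rcfType) (n : nat) (c : R) (g : 'cV[R]_n) (B : 'M[R]_n)
  (s : 'cV[R]_n) : R :=
  c + dotv g s + 2^-1 * dotv s (B *m s).

(* Main.v *)
Require Import Defs.
From HB Require Import structures.
From mathcomp Require Import all_boot all_order all_algebra.
From mathcomp Require Import ring lra.
Import Order.TTheory GRing.Theory Num.Theory.
Set Implicit Arguments. Unset Strict Implicit.
Local Open Scope ring_scope.

Section H.
Variables (R : rcfType) (n : nat).
Implicit Types u v w : 'cV[R]_n.

Lemma dotvC u v : dotv u v = dotv v u.
Proof. by apply: eq_bigr => i _; rewrite mulrC. Qed.
Lemma dotvDl u v w : dotv (u + v) w = dotv u w + dotv v w.
Proof. by rewrite /dotv -big_split; apply: eq_bigr => i _; rewrite !mxE mulrDl. Qed.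
Lemma dotvZl a u v : dotv (a *: u) v = a * dotv u v.
Proof. by rewrite /dotv mulr_sumr; apply: eq_bigr => i _; rewrite !mxE mulrA. Qed.
Lemma dotvNl u v : dotv (- u) v = - dotv u v.
Proof. by rewrite -scaleN1r dotvZl mulN1r. Qed.
Lemma dotvDr u v w : dotv w (u + v) = dotv w u + dotv w v.
Proof. by rewrite !(dotvC w) dotvDl. Qed.
Lemma dotvZr a u v : dotv v (a *: u) = a * dotv v u.
Proof. by rewrite !(dotvC v) dotvZl. Qed.
Lemma dotvNr u v : dotv v (- u) = - dotv v u.
Proof. by rewrite !(dotvC v) dotvNl. Qed.
Lemma dotv0l v : dotv 0 v = 0.
Proof. by rewrite -(scale0r 0) dotvZl mul0r. Qed.
Lemma dotv0r v : dotv v 0 = 0.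
Proof. by rewrite dotvC dotv0l. Qed.
Lemma dotv_ge0 u : 0 <= dotv u u.
Proof. by apply: sumr_ge0 => i _; rewrite -expr2 sqr_ge0. Qed.
Lemma dotv_eq0 u : dotv u u = 0 -> u = 0.
Proof.
move=> /eqP; rewrite psumr_eq0; last by move=> i _; rewrite -expr2 sqr_ge0.
move=> /allP H; apply/matrixP => i j; rewrite ord1 mxE.
by have /(_ (mem_index_enum i))/implyP/(_ isT) := H i; rewrite mulf_eq0 orbb => /eqP.
Qed.
Lemma enorm_ge0 u : 0 <= enorm u.
Proof. exact: sqrtr_ge0. Qed.
Lemma enorm_sqr u : enorm u ^+ 2 = dotv u u.
Proof. by rewrite sqr_sqrtr ?dotv_ge0. Qed.

Lemma cs_sqr u v : dotv u v ^+ 2 <= dotv u u * dotv v v.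
Proof.
have [v0|vpos] := eqVneq (dotv v v) 0.
  by rewrite v0 (@dotv_eq0 v v0) dotv0r expr0n /= mulr0.
have vp : 0 < dotv v v by rewrite lt0r vpos dotv_ge0.
set x := dotv u v / dotv v v.
have := dotv_ge0 (u - x *: v).
rewrite dotvDl !dotvDr !dotvNl !dotvNr !dotvZl !dotvZr (dotvC v u).
have -> : x * (x * dotv v v) = x * dotv u v by rewrite /x mulfVK.
rewrite /x => H.
rewrite -subr_ge0.
have : 0 <= (dotv u u - dotv u v / dotv v v * dotv u v) * dotv v v.
  apply: mulr_ge0; last exact: ltW. lra.
rewrite mulrBl mulrAC divfK // expr2 //.
Qed.

Lemma cs u v : dotv u v <= enorm u * enorm v.
Proof.
have := cs_sqr u v; rewrite -!enorm_sqr -exprMn.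
have := enorm_ge0 u; have := enorm_ge0 v.
move: (enorm u) (enorm v) (dotv u v) => a b d ha hb H.
have hab : 0 <= a * b by apply: mulr_ge0.
nra.
Qed.

Lemma enorm_tri u v : enorm (u + v) <= enorm u + enorm v.
Proof.
have h1 := enorm_ge0 (u + v); have h2 := enorm_ge0 u; have h3 := enorm_ge0 v.
have : enorm (u + v) ^+ 2 <= (enorm u + enorm v) ^+ 2.
  rewrite enorm_sqr dotvDl !dotvDr (dotvC v u) sqrrD !enorm_sqr.
  have := cs u v; lra.
move: (enorm (u+v)) (enorm u) (enorm v) h1 h2 h3 => a b c; nra.
Qed.

Lemma enormN u : enorm (- u) = enorm u.
Proof. by rewrite /enorm dotvNl dotvNr opprK. Qed.
End H.

Theorem lemmaB1 (R : rcfType) (n : nat) (g : 'cV[R]_n) (Delta : R)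
  (B : 'M[R]_n) (c t lambda1 lambda2 : R) (p r : 'cV[R]_n) :
  0 < Delta ->
  (forall h : 'cV[R]_n, 0 <= dotv h (B *m h)) ->
  0 <= t -> 0 < lambda1 -> 0 < lambda2 ->
  (forall h : 'cV[R]_n,
      2^-1 * dotv h (B *m h) + t * enorm h ^+ 2 >= lambda1 * enorm h ^+ 2) ->
  opnorm_le (B + t%:M) lambda2 ->
  (B + t%:M) *m p = - g + r ->
  enorm r <= lambda1 / (2 * (lambda1 + lambda2)) * enorm g ->
  let s := (Num.min Delta (enorm p) / enorm p) *: p in
  let gamma1 := lambda1 / (2 * lambda2) in
  let gamma2 := (lambda1 + 2 * lambda2) / (2 * lambda2 * (lambda1 + lambda2)) in
  qmodel c g B 0 - qmodel c g B s
    >= gamma1 / 2 * enorm g * Num.min Delta (gamma2 * enorm g).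
Proof.
move=> hD hB ht h1 h2 hlam hop hMp hr; cbv zeta.
set s := (Num.min Delta (enorm p) / enorm p) *: p.
set gamma1 := lambda1 / (2 * lambda2).
set gamma2 := (lambda1 + 2 * lambda2) / (2 * lambda2 * (lambda1 + lambda2)).
set a := enorm p; set G := enorm g; set Rn := enorm r.
have ha : 0 <= a := enorm_ge0 p.
have hG : 0 <= G := enorm_ge0 g.
have hR : 0 <= Rn := enorm_ge0 r.
have hge : g = r - (B + t%:M) *m p by rewrite hMp opprD opprK addrCA subrr addr0.
have F5 : G <= lambda2 * a + Rn.
  rewrite /G hge; apply: le_trans (enorm_tri _ _) _.
  rewrite enormN addrC lerD2r; exact: hop.
have hr' : Rn <= lambda1 / (2 * (lambda1 + lambda2)) * G := hr.
set k := lambda1 / (2 * (lambda1 + lambda2)) in hr'.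
have hk : k * G + lambda2 * a >= G by lra.
have Ha : gamma2 * G <= a.
  have -> : gamma2 = (1 - k) / lambda2.
    rewrite /gamma2 /k; field; apply/andP; split; lra.
  rewrite mulrAC ler_pdivrMr //; lra.
have Hg1 : gamma1 * G <= lambda1 * a - Rn.
  have -> : gamma1 = lambda1 * gamma2 - k.
    rewrite /gamma1 /gamma2 /k; field; apply/andP; split; lra.
  have : lambda1 * (gamma2 * G) <= lambda1 * a by rewrite ler_pM2l.
  lra.
have g1pos : 0 <= gamma1 by rewrite /gamma1 divr_ge0 //; lra.
have q0 : qmodel c g B 0 = c by rewrite /qmodel dotv0r dotv0l; ring.
rewrite q0.
have [a0|apos] := eqVneq a 0.
  have G0 : G = 0.
    apply/le_anti/andP; split => //.
    have : gamma2 * G <= 0 by rewrite -a0.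
    have : 0 < gamma2 by rewrite /gamma2 divr_gt0 //; [lra | apply: mulr_gt0; lra].
    nra.
  rewrite /s -/a a0 invr0 mulr0 scale0r q0 G0; lra.
have ap : 0 < a by rewrite lt0r apos.
set m := Num.min Delta a.
have mp : 0 < m by rewrite /m lt_min hD.
have ma : m <= a by rewrite /m ge_min lexx orbT.
set al := m / a.
have alp : 0 < al by rewrite divr_gt0.
have al1 : al <= 1 by rewrite /al ler_pdivrMr // mul1r.
have alam : al * a = m by rewrite /al divfK.
set beta := dotv p (B *m p).
have hbeta : 0 <= beta := hB p.
have Hp := hlam p. rewrite -/beta -/a in Hp.
have Hq : qmodel c g B s = c + al * dotv g p + 2^-1 * (al * al * beta).
  by rewrite /qmodel /s -/a -/al -scalemxAr dotvZr dotvZl dotvZr mulrA.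
rewrite Hq.
have Hgp : dotv g p = dotv r p - beta - t * a ^+ 2.
  rewrite hge dotvDl dotvNl mulmxDl mul_scalar_mx dotvDl dotvZl (dotvC (B *m p)).
  by rewrite /a enorm_sqr /beta; ring.
have Hrp : dotv r p <= Rn * a := cs r p.
rewrite Hgp.
have step1 : al * (lambda1 * a ^+ 2 - Rn * a) <=
   c - (c + al * (dotv r p - beta - t * a ^+ 2) + 2^-1 * (al * al * beta)).
  have : al * (al * beta) <= al * beta by rewrite ler_pM2l // ler_piMl.
  have : al * (lambda1 * a ^+ 2 - Rn * a) <= al * (2^-1 * beta + t * a ^+ 2 - dotv r p).
    rewrite ler_pM2l //; lra.
  have h2i : 2^-1 * (al * al * beta) = 2^-1 * (al * (al * beta)) by rewrite mulrA.
  rewrite h2i. set X := al * (al * beta). move=> A1 A2.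
  have : 2^-1 * X <= 2^-1 * (al * beta) by rewrite ler_pM2l // invr_gt0; lra.
  rewrite /X in A1 A2 *. clear h2i. 
  lra.
apply: le_trans step1.
have -> : al * (lambda1 * a ^+ 2 - Rn * a) = m * (lambda1 * a - Rn).
  by rewrite -alam; ring.
have Hmin : Num.min Delta (gamma2 * G) <= m.
  rewrite /m le_min ge_min lexx /= ge_min Ha orbT //.
have Hmin0 : 0 <= Num.min Delta (gamma2 * G).
  rewrite le_min ltW //=. apply: mulr_ge0 => //; rewrite /gamma2 divr_ge0 //; [lra|].
  apply: mulr_ge0; [|lra]; lra.
set Mn := Num.min Delta (gamma2 * G).
have : gamma1 * G * Mn <= m * (lambda1 * a - Rn).
  apply: le_trans (_ : gamma1 * G * m <= _).
    by apply: ler_wpM2l => //; rewrite mulr_ge0.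
  by rewrite mulrC; apply: ler_wpM2l => //; apply: ltW.
have : 0 <= gamma1 * G * Mn by apply: mulr_ge0 => //; apply: mulr_ge0.
have E : gamma1 / 2 * G * Mn = 2^-1 * (gamma1 * G * Mn).
  by rewrite [gamma1 / 2]mulrC -!mulrA.
lra.
Qed.
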